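(* Under the Standing Assumptions, let $g:X\to X$ be a homeomorphism commuting with $f$ and let $\Gamma:\mathcal E\to\mathcal E$ be a continuous linear extension of $g$ (fiber isomorphisms $\Gamma_x:\mathcal E_x\to\mathcal E_{gx}$ depending continuously on $x$) commuting with $F$, i.e. $\Gamma_{fx}\circ F_x=F_{gx}\circ\Gamma_x$ for all $x$. Then $\Gamma_x(\mathcal E^i_x)=\mathcal E^i_{gx}$ for all $x\in X$ and $i=1,\dots,\ell$; in particular $\Gamma_x\in\mathcal R_{x,gx}$. (This applies to $\Gamma_x=D_0\mathcal G_x$ for a $C^1$ extension $\mathcal G$ of $g$ preserving the zero section and commuting with $\mathcal F$.)
   Context: Standing Assumptions: $X$ is a compact metric space, $f:X\to X$ a homeomorphism, $\mathcal E$ a continuous finite-dimensional real vector bundle over $X$ with a continuous family of inner-product norms. $F:\mathcal E\to\mathcal E$ is a continuous linear extension of $f$ with fiber isomorphisms $F_x:\mathcal E_x\to\mathcal E_{fx}$; $\chi=(\chi_1,\dots,\chi_\ell)$ with $\chi_1<\dots<\chi_\ell<0$ and $0<\varepsilon<\varepsilon_0(\chi)$; there is a continuous $F$-invariant splitting $\mathcal E=\mathcal E^1\oplus\dots\oplus\mathcal E^\ell$ with $e^{\chi_i-\varepsilon}\|t\|\le\|F_xt\|\le e^{\chi_i+\varepsilon}\|t\|$ for $t\in\mathcal E^i_x$ (after choosing a suitable continuous metric; this holds whenever $F$ has $(\chi,\varepsilon)$-spectrum, i.e. $\{\lambda: e^\lambda\in\mathrm{Sp}(F^*_{\mathbb C})\}\subset\bigcup_i(\chi_i-\varepsilon,\chi_i+\varepsilon)$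 where $F^*v(x)=F(v(f^{-1}x))$ on continuous sections). $\mathcal R_{x,y}$ denotes resonance polynomial maps $\mathcal E_x\to\mathcal E_y$ fixing $0$ with invertible derivative; a linear map is in $\mathcal R_{x,y}$ iff it maps $\mathcal E^i_x$ into $\mathcal E^i_y$ for all $i$. Constants: $d=\lfloor\chi_1/\chi_\ell\rfloor$; $\tilde\lambda=\max\{-\chi_i+\sum_js_j\chi_j<0\}$, $\mu=\max\{\chi_i-\sum_js_j\chi_j<0\}$ (over $i$ and non-negative integers $s_j$ making the expression negative); $\lambda=\max\{\tilde\lambda,-\chi_1+(d+1)\chi_\ell\}$; $\varepsilon_0(\chi)=\min\{-\chi_\ell,-\lambda/(d+2),-\mu/(d+1)\}$. *)

(* Defs.v *)
From HB Require Import structures.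
From mathcomp Require Import all_boot all_order all_algebra.
From mathcomp Require Import all_classical all_reals all_analysis.
Set Implicit Arguments. Unset Strict Implicit. Unset Printing Implicit Defensive.
Import Order.TTheory GRing.Theory Num.Theory.
Import numFieldNormedType.Exports.
Local Open Scope classical_set_scope.
Local Open Scope ring_scope.

(* The bundle E is realised as a continuous subbundle of the trivial bundle
   X x R^N: fibre E_x = row space of an orthogonal projection matrix P x
   depending continuously on x.  Vectors are row vectors 'rV_N, linear maps
   act on the right (t |-> t *m A). *)

Definition is_orth_proj (R : realType) (N : nat) (P : 'M[R]_N) : Prop :=
  P *m P = P /\ P^T = P.

Definition cont_subbundle (R : realType) (X : topologicalType) (N : nat)
  (P : X -> 'M[R]_N) : Prop :=
  continuous P /\ forall x, is_orth_proj (P x).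

(* continuous linear extension of h : X -> X on the subbundle P, given by a
   continuous matrix field A: the fibre map E_x -> E_{h x} is t |-> t *m A x,
   and it is a linear isomorphism E_x -> E_{h x}. *)
Definition lin_extension (R : realType) (X : topologicalType) (N : nat)
  (P : X -> 'M[R]_N) (h : X -> X) (A : X -> 'M[R]_N) : Prop :=
  continuous A /\
  forall x, (P x *m A x == P (h x))%MS /\ \rank (P x) = \rank (P (h x)).

Definition homeomorphism (X : topologicalType) (h : X -> X) : Prop :=
  exists hinv : X -> X,
    [/\ continuous h, continuous hinv, cancel h hinv & cancel hinv h].

Definition fib_norm (R : realType) (N : nat) (G : 'M[R]_N) (t : 'rV[R]_N) : R :=
  Num.sqrt ((t *m G *m t^T) 0 0).

Definition cont_inner (R : realType) (X : topologicalType) (N : nat)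
  (G : X -> 'M[R]_N) : Prop :=
  continuous G /\
  forall x, (G x)^T = G x /\
    forall t : 'rV[R]_N, t != 0 -> 0 < (t *m G x *m t^T) 0 0.

(* Constants attached to chi = (chi_1 < ... < chi_l), indexed by 'I_l.+1 *)
Section Consts.
Variables (R : realType) (l : nat) (chi : 'I_l.+1 -> R).

Definition chi1 := chi ord0.
Definition chil := chi ord_max.

Definition dconst : R := (Num.floor (chi1 / chil))%:~R.

Definition combo (s : 'I_l.+1 -> nat) : R := \sum_j (s j)%:R * chi j.

(* tilde lambda = max { -chi_i + sum_j s_j chi_j < 0 } (max exists, = sup) *)
Definition lambda_tilde : R :=
  sup [set r : R | exists i (s : 'I_l.+1 -> nat),
         r = - chi i + combo s /\ r < 0].

Definition mu_const : R :=
  sup [set r : R | exists i (s : 'I_l.+1 -> nat),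
         r = chi i - combo s /\ r < 0].

Definition lambda_const : R :=
  Num.max lambda_tilde (- chi1 + (dconst + 1) * chil).

Definition eps0 : R :=
  Num.min (- chil)
    (Num.min (- lambda_const / (dconst + 2)) (- mu_const / (dconst + 1))).
End Consts.

(* Main.v *)
Require Import Defs.
From HB Require Import structures.
From mathcomp Require Import all_boot all_order all_algebra.
From mathcomp Require Import all_classical all_reals all_analysis.
From mathcomp Require Import ring lra zify.
Import Order.TTheory GRing.Theory Num.Theory.
Import numFieldNormedType.Exports.
Local Open Scope classical_set_scope.
Local Open Scope ring_scope.

Section QF.
Variables (R : realType) (N : nat).
Implicit Types (M : 'M[R]_N) (s t : 'rV[R]_N).

Definition qf M t := (t *m M *m t^T) 0 0.
Definition bf M s t := (s *m M *m t^T) 0 0.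

Lemma bfC M s t : M^T = M -> bf M s t = bf M t s.
Proof.
move=> HM; rewrite /bf.
have -> : (t *m M *m s^T) 0 0 = ((t *m M *m s^T)^T) 0 0 by rewrite [in RHS]mxE.
by rewrite !trmx_mul trmxK HM mulmxA.
Qed.

Lemma bfDl M s1 s2 t : bf M (s1 + s2) t = bf M s1 t + bf M s2 t.
Proof. by rewrite /bf !mulmxDl mxE. Qed.

Lemma bfDr M s t1 t2 : bf M s (t1 + t2) = bf M s t1 + bf M s t2.
Proof. by rewrite /bf linearD /= mulmxDr mxE. Qed.

Lemma bfZl M a s t : bf M (a *: s) t = a * bf M s t.
Proof. by rewrite /bf -!scalemxAl mxE. Qed.

Lemma bfZr M a s t : bf M s (a *: t) = a * bf M s t.
Proof. by rewrite /bf linearZ /= -scalemxAr mxE. Qed.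

Lemma qfE M t : qf M t = bf M t t.
Proof. by []. Qed.

Lemma bf0r M s : bf M s 0 = 0.
Proof. by rewrite /bf trmx0 mulmx0 mxE. Qed.

Lemma qf_comb M s t r : M^T = M ->
  qf M (s + r *: t) = qf M s + 2 * r * bf M s t + r ^+ 2 * qf M t.
Proof.
move=> HM; rewrite !qfE bfDl !bfDr !bfZl !bfZr (bfC _ t _ HM); ring.
Qed.

Definition posdef M := M^T = M /\ forall t, t != 0 -> 0 < qf M t.

Lemma qf_ge0 {M} t : posdef M -> 0 <= qf M t.
Proof.
move=> [_ H]; have [->|/H/ltW//] := eqVneq t 0.
by rewrite qfE bf0r.
Qed.

Lemma qf_gt0 {M t} : posdef M -> t != 0 -> 0 < qf M t.
Proof. by move=> [_ H] /H. Qed.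

Lemma cauchy_schwarz M s t : posdef M -> bf M s t ^+ 2 <= qf M s * qf M t.
Proof.
move=> pM; have [->|tn0] := eqVneq t 0.
  by rewrite bf0r expr0n /= mulr_ge0 ?(qf_ge0 _ pM).
have c0 := qf_gt0 pM tn0.
have := qf_ge0 (s + (- bf M s t / qf M t) *: t) pM.
rewrite qf_comb; last by case: pM.
set b := bf M s t; set c := qf M t; set a := qf M s => H.
have : 0 <= (a + 2 * (- b / c) * b + (- b / c) ^+ 2 * c) * c.
  by rewrite mulr_ge0 // ltW.
have -> : (a + 2 * (- b / c) * b + (- b / c) ^+ 2 * c) * c = a * c - b ^+ 2.
  by field; rewrite gt_eqF.
by rewrite subr_ge0.
Qed.

Definition nrm M t := Num.sqrt (qf M t).

Lemma nrm_ge0 M t : 0 <= nrm M t.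
Proof. exact: sqrtr_ge0. Qed.

Lemma nrm0 M : nrm M 0 = 0.
Proof. by rewrite /nrm qfE bf0r sqrtr0. Qed.

Lemma nrm_gt0 M t : posdef M -> t != 0 -> 0 < nrm M t.
Proof. by move=> pM tn0; rewrite /nrm sqrtr_gt0 qf_gt0. Qed.

Lemma nrmN M t : nrm M (- t) = nrm M t.
Proof.
have -> : - t = (-1) *: t by rewrite scaleN1r.
by rewrite /nrm !qfE bfZl bfZr mulrA mulrNN !mul1r.
Qed.

Lemma nrmD M s t : posdef M -> nrm M (s + t) <= nrm M s + nrm M t.
Proof.
move=> pM; have E := qf_comb M s t 1 (proj1 pM); rewrite scale1r in E.
have hs := qf_ge0 s pM; have ht := qf_ge0 t pM.
have cs := cauchy_schwarz M s t pM.
rewrite /nrm -(ger0_norm (addr_ge0 (sqrtr_ge0 (qf M s)) (sqrtr_ge0 (qf M t)))).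
rewrite -sqrtr_sqr ler_sqrt ?sqr_ge0 // E.
rewrite sqrrD !sqr_sqrtr // expr1n mul1r mulr1.
have hb : bf M s t <= Num.sqrt (qf M s) * Num.sqrt (qf M t).
  rewrite -sqrtrM //; apply: le_trans (ler_norm _) _.
  by rewrite -sqrtr_sqr ler_sqrt ?mulr_ge0.
rewrite mulr2n; lra.
Qed.

Lemma nrmB M s t : posdef M -> nrm M (s - t) <= nrm M s + nrm M t.
Proof. by move=> pM; rewrite -(nrmN M t); exact: nrmD. Qed.

Lemma nrm_sum M (I : finType) (P : pred I) (v : I -> 'rV[R]_N) : posdef M ->
  nrm M (\sum_(j | P j) v j) <= \sum_(j | P j) nrm M (v j).
Proof.
move=> pM; elim/big_rec2: _ => [|j a b _ Hab]; first by rewrite nrm0.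
by apply: le_trans (nrmD M _ _ pM) _; rewrite lerD2l.
Qed.

Lemma qfZ M a t : qf M (a *: t) = a ^+ 2 * qf M t.
Proof. by rewrite !qfE bfZl bfZr mulrA expr2. Qed.

End QF.
Arguments qf {R N}.
Arguments bf {R N}.
Arguments bfC {R N}.
Arguments bfDl {R N}.
Arguments bfDr {R N}.
Arguments bfZl {R N}.
Arguments bfZr {R N}.
Arguments qfE {R N}.
Arguments bf0r {R N}.
Arguments qf_comb {R N}.
Arguments posdef {R N}.
Arguments qf_ge0 {R N}.
Arguments qf_gt0 {R N}.
Arguments cauchy_schwarz {R N}.
Arguments nrm {R N}.
Arguments nrm_ge0 {R N}.
Arguments nrm0 {R N}.
Arguments nrm_gt0 {R N}.
Arguments nrmN {R N}.
Arguments nrmD {R N}.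
Arguments nrmB {R N}.
Arguments nrm_sum {R N}.
Arguments qfZ {R N}.

Section Analytic.
Variable R : realType.

Lemma exp_dom (a B g : R) : 0 < a -> 0 < g ->
  (forall n : nat, a <= B * expR (- (n%:R * g))) -> False.
Proof.
move=> a0 g0 H.
have [B0|B0] := lerP B 0.
  have := H 0%N; rewrite mul0r oppr0 expR0 mulr1 => haB.
  by have := le_trans haB B0; rewrite leNgt a0.
set n := (Num.truncn (B / (a * g))).+1.
have hn : B / (a * g) < n%:R by exact: truncnS_gt.
have := H n; rewrite expRN.
have e0 := expR_gt0 (n%:R * g).
rewrite ler_pdivlMr // => Ha.
have h1 : n%:R * g < expR (n%:R * g).
  by apply: lt_le_trans (expR_ge1Dx _); rewrite ltrDr.
have h2 : B < a * (n%:R * g).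
  have -> : a * (n%:R * g) = n%:R * (a * g) by rewrite mulrCA.
  by rewrite -ltr_pdivrMr ?mulr_gt0.
have : a * (n%:R * g) < a * expR (n%:R * g) by rewrite ltr_pM2l.
move=> h3; have := lt_trans h2 h3.
by rewrite ltNge Ha.
Qed.

Lemma final_step (I : finType) (k : I) (al b0 g C Tk : R) (T be : I -> R) :
  0 < g -> 0 < Tk -> b0 <= al - g ->
  (forall j, j != k -> T j = 0 \/ be j <= al - g) -> (forall j, 0 <= T j) ->
  (forall n : nat, Tk * expR (n%:R * al) <=
     C * expR (n%:R * b0) + \sum_(j | j != k) T j * expR (n%:R * be j)) ->
  False.
Proof.
move=> g0 Tk0 hb0 hbe hT H.
apply: (@exp_dom Tk (`|C| + \sum_(j | j != k) T j) g Tk0 g0) => n.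
have := H n.
set E := expR (n%:R * al).
have E0 : 0 < E by exact: expR_gt0.
have key : forall b, b <= al - g -> expR (n%:R * b) <= E * expR (- (n%:R * g)).
  move=> b hb; rewrite -expRD ler_expR -mulrN -mulrDr ler_wpM2l //.
have hC : C * expR (n%:R * b0) <= `|C| * (E * expR (- (n%:R * g))).
  apply: le_trans (ler_norm _) _; rewrite normrM (gtr0_norm (expR_gt0 _)).
  by rewrite ler_wpM2l // key.
have hS : \sum_(j | j != k) T j * expR (n%:R * be j) <=
          \sum_(j | j != k) T j * (E * expR (- (n%:R * g))).
  apply: ler_sum => j /hbe [->|hj]; first by rewrite !mul0r.
  by rewrite ler_wpM2l // key.
move=> Hn; have := le_trans Hn (lerD hC hS).
rewrite -mulr_suml -mulrDl mulrCA (mulrC Tk).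
by rewrite ler_pM2l.
Qed.

End Analytic.

Section Dyn.
Variables (R : realType) (X : Type) (N l : nat) (f finv g : X -> X).
Variables (P A B G : X -> 'M[R]_N) (Pi : 'I_l.+1 -> X -> 'M[R]_N).
Variables (chi : 'I_l.+1 -> R) (eps mu K : R).
Hypotheses (hfK : cancel f finv) (hKf : cancel finv f)
  (hfg : forall x, g (f x) = f (g x))
  (hAP : forall x, (P x *m A x == P (f x))%MS)
  (hBP : forall x, (P x *m B x == P (g x))%MS)
  (hsum : forall x, (\sum_i Pi i x == P x)%MS)
  (hdirect : forall x, mxdirect (\sum_i Pi i x))
  (hinv : forall i x, (Pi i x *m A x == Pi i (f x))%MS)
  (hG : forall x, posdef (G x))
  (hgrowth : forall i x (t : 'rV[R]_N), (t <= Pi i x)%MS ->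
      expR (chi i - eps) * nrm (G x) t <= nrm (G (f x)) (t *m A x) /\
      nrm (G (f x)) (t *m A x) <= expR (chi i + eps) * nrm (G x) t)
  (hcomm : forall x, P x *m A x *m B (f x) = P x *m B x *m A (g x))
  (hKb : forall x t, nrm (G (g x)) (t *m B x) <= K * nrm (G x) t)
  (hK0 : 0 <= K)
  (hgap : forall a b : 'I_l.+1, (a < b)%N -> chi a - chi b <= mu)
  (hmu : mu + 2 * eps < 0).

Fixpoint An (x : X) (n : nat) : 'M[R]_N :=
  if n is n'.+1 then A x *m An (f x) n' else 1%:M.

Lemma An_inv n : forall x i, (Pi i x *m An x n :=: Pi i (iter n f x))%MS.
Proof.
elim: n => [|n IH] x i /=; first by rewrite mulmx1.
rewrite mulmxA.
apply: eqmx_trans (eqmxMr _ (eqmxP (hinv i x))) _.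
by rewrite -iterS iterSr; exact: IH.
Qed.

Lemma An_P n : forall x, (P x *m An x n :=: P (iter n f x))%MS.
Proof.
elim: n => [|n IH] x /=; first by rewrite mulmx1.
rewrite mulmxA.
apply: eqmx_trans (eqmxMr _ (eqmxP (hAP x))) _.
by rewrite -iterS iterSr; exact: IH.
Qed.

Lemma iter_g n x : iter n f (g x) = g (iter n f x).
Proof. by elim: n => //= n ->; rewrite hfg. Qed.

Lemma finv_g z : finv (g z) = g (finv z).
Proof. by rewrite -{1}(hKf z) hfg hfK. Qed.

Lemma iter_finv_g n x : iter n finv (g x) = g (iter n finv x).
Proof. by elim: n => //= n ->; rewrite finv_g. Qed.

Lemma iter_f_finv n x : iter n f (iter n finv x) = x.
Proof. by elim: n => // n IH; rewrite iterSr iterS hKf. Qed.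


Lemma comm_iter n : forall x (t : 'rV[R]_N), (t <= P x)%MS ->
  t *m An x n *m B (iter n f x) = t *m B x *m An (g x) n.
Proof.
elim: n => [|n IH] x t ht /=; first by rewrite !mulmx1.
have htA : (t *m A x <= P (f x))%MS.
  by rewrite -(eqmxP (hAP x)); exact: submxMr.
rewrite mulmxA -iterS iterSr IH //.
case/submxP: ht => w ->.
by rewrite -!(mulmxA w) hcomm !mulmxA hfg.
Qed.


Lemma growth_iter n : forall x j (t : 'rV[R]_N), (t <= Pi j x)%MS ->
  expR (n%:R * (chi j - eps)) * nrm (G x) t <= nrm (G (iter n f x)) (t *m An x n) /\
  nrm (G (iter n f x)) (t *m An x n) <= expR (n%:R * (chi j + eps)) * nrm (G x) t.
Proof.
elim: n => [|n IH] x j t ht.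
  by rewrite /= !mul0r !expR0 !mul1r mulmx1; split.
have ht' : (t *m A x <= Pi j (f x))%MS.
  by rewrite -(eqmxP (hinv j x)); exact: submxMr.
have [lo hi] := hgrowth j x t ht.
have [lo' hi'] := IH _ _ _ ht'.
have E c : expR ((n.+1)%:R * c) = expR (n%:R * c) * expR c.
  by rewrite -addn1 natrD mulrDl mul1r expRD.
rewrite iterSr /= mulmxA !E.
have e1 := expR_gt0 (n%:R * (chi j - eps)).
have e2 := expR_gt0 (n%:R * (chi j + eps)).
split.
  apply: le_trans lo'; rewrite -mulrA ler_wpM2l // ltW //.
apply: le_trans hi' _; rewrite -mulrA ler_wpM2l // ltW //.
Qed.

Lemma PiP j x : (Pi j x <= P x)%MS.
Proof. by rewrite -(eqmxP (hsum x)); exact: (sumsmx_sup j). Qed.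

Lemma decomp x (t : 'rV[R]_N) : (t <= P x)%MS ->
  exists u : 'I_l.+1 -> 'rV[R]_N, (forall j, (u j <= Pi j x)%MS) /\ t = \sum_j u j.
Proof.
rewrite -(eqmxP (hsum x)) => /sub_sumsmxP [u_ ->].
by exists (fun j => u_ j *m Pi j x); split => // j; exact: submxMl.
Qed.

Lemma uniq0 x (u : 'I_l.+1 -> 'rV[R]_N) : (forall j, (u j <= Pi j x)%MS) ->
  \sum_j u j = 0 -> forall j, u j = 0.
Proof.
move=> hu hs j.
have hcap := (mxdirect_sumsP (hdirect x)) j isT.
have e : u j = - \sum_(k | k != j) u k.
  by move: hs; rewrite (bigD1 j) //= => /eqP; rewrite addr_eq0 => /eqP.
have : (u j <= Pi j x :&: \sum_(k | true && (k != j)) Pi k x)%MS.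
  rewrite sub_capmx hu /=; rewrite {1}e eqmx_opp.
  by apply: summx_sub_sums => k _.
by rewrite hcap submx0 => /eqP.
Qed.

Lemma uniq2 x (u v : 'I_l.+1 -> 'rV[R]_N) : (forall j, (u j <= Pi j x)%MS) ->
  (forall j, (v j <= Pi j x)%MS) -> \sum_j u j = \sum_j v j -> forall j, u j = v j.
Proof.
move=> hu hv hs j; apply/eqP; rewrite -subr_eq0; apply/eqP.
apply: (@uniq0 x (fun k => u k - v k)) => [k|].
  by apply: addmx_sub => //; rewrite eqmx_opp.
by rewrite sumrB hs subrr.
Qed.

Lemma slow_conv z i C (t : 'rV[R]_N) (u : 'I_l.+1 -> 'rV[R]_N) :
  (forall j, (u j <= Pi j z)%MS) -> t = \sum_j u j ->
  (forall n : nat, nrm (G (iter n f z)) (t *m An z n) <= C * expR (n%:R * (chi i + eps))) ->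
  forall j : 'I_l.+1, (i < j)%N -> u j = 0.
Proof.
move=> hu ht hC j0 hij0; apply/eqP/negPn/negP => hnz.
pose Pr (k : 'I_l.+1) := (i < k)%N && (u k != 0).
have Pj0 : Pr j0 by rewrite /Pr hij0 hnz.
case: (arg_maxnP (fun k : 'I_l.+1 => nat_of_ord k) Pj0) => k /andP[hik hk] hmax.
have hzero : forall j : 'I_l.+1, (k < j)%N -> u j = 0.
  move=> j hkj; apply/eqP/negPn/negP => hj.
  have : Pr j by rewrite /Pr hj andbT (ltn_trans hik hkj).
  by move/hmax => /=; rewrite leqNgt hkj.
apply: (@final_step R _ k (chi k - eps) (chi i + eps) (- (mu + 2 * eps)) C
   (nrm (G z) (u k)) (fun j => nrm (G z) (u j)) (fun j => chi j + eps)).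
- by rewrite oppr_gt0.
- exact: nrm_gt0.
- have := hgap i k hik; lra.
- move=> j hjk; case: (ltngtP k j) => [hkj|hjk'|/val_inj e]; last by rewrite e eqxx in hjk.
  + by left; rewrite hzero // nrm0.
  + by right; have := hgap j k hjk'; lra.
- by move=> j; exact: nrm_ge0.
move=> n.
set y := iter n f z.
have hwk : u k *m An z n = t *m An z n - \sum_(j | j != k) (u j *m An z n).
  by rewrite ht mulmx_suml (bigD1 k) //= addrK.
apply: (@le_trans _ _ (nrm (G y) (u k *m An z n))).
  by rewrite mulrC; exact: (growth_iter n z k (u k) (hu k)).1.
rewrite hwk; apply: le_trans (nrmB _ _ _ (hG _)) _; apply: lerD; first exact: hC.
apply: le_trans (nrm_sum _ _ _ _ (hG _)) _; apply: ler_sum => j _.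
by rewrite mulrC; exact: (growth_iter n z j (u j) (hu j)).2.
Qed.



Lemma back_conv z i C (t : 'rV[R]_N) (u : 'I_l.+1 -> 'rV[R]_N) :
  (forall j, (u j <= Pi j z)%MS) -> t = \sum_j u j ->
  (forall n : nat, exists s : 'rV[R]_N, (s <= P (iter n finv z))%MS /\
      s *m An (iter n finv z) n = t /\
      nrm (G (iter n finv z)) s <= C * expR (n%:R * (- (chi i - eps)))) ->
  forall j : 'I_l.+1, (j < i)%N -> u j = 0.
Proof.
move=> hu ht hC j0 hij0; apply/eqP/negPn/negP => hnz.
pose Pr (k : 'I_l.+1) := (k < i)%N && (u k != 0).
have Pj0 : Pr j0 by rewrite /Pr hij0 hnz.
case: (arg_minnP (fun k : 'I_l.+1 => nat_of_ord k) Pj0) => k /andP[hik hk] hmin.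
have hzero : forall j : 'I_l.+1, (j < k)%N -> u j = 0.
  move=> j hkj; apply/eqP/negPn/negP => hj.
  have : Pr j by rewrite /Pr hj andbT (ltn_trans hkj hik).
  by move/hmin => /=; rewrite leqNgt hkj.
apply: (@final_step R _ k (- (chi k + eps)) (- (chi i - eps)) (- (mu + 2 * eps)) C
   (nrm (G z) (u k)) (fun j => nrm (G z) (u j)) (fun j => - (chi j - eps))).
- by rewrite oppr_gt0.
- exact: nrm_gt0.
- have := hgap k i hik; lra.
- move=> j hjk; case: (ltngtP k j) => [hkj|hjk'|/val_inj e]; last by rewrite e eqxx in hjk.
  + by right; have := hgap k j hkj; lra.
  + by left; rewrite hzero // nrm0.
- by move=> j; exact: nrm_ge0.
move=> n.
have [s [hsP [hsA hsn]]] := hC n.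
set y := iter n finv z in hsP hsA hsn.
have hyz : iter n f y = z by exact: iter_f_finv.
have [v [hv hsv]] := decomp y s hsP.
have hvA : forall j, (v j *m An y n <= Pi j z)%MS.
  by move=> j; rewrite -hyz -(An_inv n y j); exact: submxMr.
have hvu : forall j, v j *m An y n = u j.
  apply: (@uniq2 z (fun j => v j *m An y n) u hvA hu); by rewrite -mulmx_suml -hsv hsA.
have hvk : v k = s - \sum_(j | j != k) v j.
  by rewrite hsv (bigD1 k) //= addrK.
have hG' := hG y.
apply: (@le_trans _ _ (nrm (G y) (v k))).
  have := (growth_iter n y k (v k) (hv k)).2; rewrite hyz hvu.
  rewrite -ler_pdivrMl ?expR_gt0 // => H.
  by rewrite mulrN expRN mulrC.
rewrite hvk; apply: le_trans (nrmB _ _ _ hG') _; apply: lerD; first exact: hsn.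
apply: le_trans (nrm_sum _ _ _ _ hG') _; apply: ler_sum => j _.
have := (growth_iter n y j (v j) (hv j)).1; rewrite hyz hvu.
rewrite -ler_pdivlMl ?expR_gt0 // => H.
by rewrite mulrN expRN mulrC.
Qed.


Lemma gamma_dec x i (t : 'rV[R]_N) (u : 'I_l.+1 -> 'rV[R]_N) :
  (t <= Pi i x)%MS ->
  (forall j, (u j <= Pi j (g x))%MS) -> t *m B x = \sum_j u j ->
  forall j, j != i -> u j = 0.
Proof.
move=> ht hu htu j hji.
have htP : (t <= P x)%MS := submx_trans ht (PiP i x).
case: (ltngtP i j) => [hij|hji'|/val_inj e]; last by rewrite e eqxx in hji.
- apply: (@slow_conv (g x) i (K * nrm (G x) t) _ u hu htu _ j hij) => n.
  rewrite iter_g -comm_iter //.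
  apply: le_trans (hKb _ _) _; rewrite -mulrA ler_wpM2l //.
  by rewrite mulrC; exact: (growth_iter n x i t ht).2.
- apply: (@back_conv (g x) i (K * nrm (G x) t) _ u hu htu _ j hji') => n.
  set y := iter n finv x.
  have hyx : iter n f y = x by exact: iter_f_finv.
  have : (t <= Pi i y *m An y n)%MS by rewrite (An_inv n y i) hyx.
  case/submxP => w hw.
  set s0 := w *m Pi i y.
  have hs0 : (s0 <= Pi i y)%MS by exact: submxMl.
  have hs0P : (s0 <= P y)%MS := submx_trans hs0 (PiP i y).
  have hs0A : s0 *m An y n = t by rewrite hw mulmxA.
  exists (s0 *m B y); rewrite iter_finv_g; split; [|split].
  + by rewrite -(eqmxP (hBP y)); exact: submxMr.
  + by rewrite -comm_iter // hyx hs0A.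
  + apply: le_trans (hKb _ _) _; rewrite -mulrA ler_wpM2l //.
    have := (growth_iter n y i s0 hs0).1; rewrite hyx hs0A.
    rewrite -ler_pdivlMl ?expR_gt0 // => H.
    by rewrite mulrN expRN mulrC.
Qed.

Lemma gamma_Pi x i : (Pi i x *m B x <= Pi i (g x))%MS.
Proof.
apply/row_subP => r; rewrite row_mul.
set t := row r (Pi i x).
have ht : (t <= Pi i x)%MS by exact: row_sub.
have htb : (t *m B x <= P (g x))%MS.
  rewrite -(eqmxP (hBP x)); apply: submxMr; exact: submx_trans ht (PiP i x).
have [u [hu htu]] := decomp (g x) _ htb.
have hz := gamma_dec x i t u ht hu htu.
by rewrite htu (bigD1 i) //= big1 ?addr0 // => j /hz.
Qed.

End Dyn.

Lemma eq_from_sub (F : fieldType) n l (Pi Qi : 'I_l.+1 -> 'M[F]_n) (P Q M : 'M[F]_n) :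
  (\sum_i Pi i == P)%MS -> (\sum_i Qi i == Q)%MS ->
  mxdirect (\sum_i Pi i) -> mxdirect (\sum_i Qi i) ->
  (P *m M == Q)%MS -> \rank P = \rank Q ->
  (forall i, (Pi i *m M <= Qi i)%MS) -> forall i, (Pi i *m M == Qi i)%MS.
Proof.
move=> hP hQ dP dQ hM hrk hsub i.
have hker : \rank (P :&: kermx M) = 0%N.
  have := mxrank_mul_ker P M; rewrite (eqmx_rank hM) hrk; lia.
have hr : forall j, \rank (Pi j *m M) = \rank (Pi j).
  move=> j; have := mxrank_mul_ker (Pi j) M.
  have : (\rank (Pi j :&: kermx M) <= \rank (P :&: kermx M))%N.
    apply: mxrankS; apply: capmxS => //.
    by rewrite -(eqmxP hP); exact: (sumsmx_sup j).
  rewrite hker; lia.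
have sP : (\sum_j \rank (Pi j))%N = \rank P.
  by move: dP; rewrite mxdirectE /= => /eqP <-; rewrite (eqmx_rank hP).
have sQ : (\sum_j \rank (Qi j))%N = \rank Q.
  by move: dQ; rewrite mxdirectE /= => /eqP <-; rewrite (eqmx_rank hQ).
have hle : forall j, (\rank (Pi j) <= \rank (Qi j))%N.
  by move=> j; rewrite -hr; exact: mxrankS.
have heq : \rank (Pi i) = \rank (Qi i).
  have := sP; rewrite hrk -sQ (bigD1 i) //= [in RHS](bigD1 i) //=.
  have : (\sum_(j | j != i) \rank (Pi j) <= \sum_(j | j != i) \rank (Qi j))%N.
    by apply: leq_sum => j _.
  have := hle i.
  move=> h1 h2 h3; apply/eqP; rewrite eqn_leq h1 /=.
  move: h3; set a := (X in (_ + X)%N = _); set b := (X in _ = (_ + X)%N) => h3.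
  have h2' : (a <= b)%N by [].
  rewrite -(leq_add2r a) h3 leq_add2l; exact: h2'.
have [_ <-] := mxrank_leqif_eq (hsub i).
by rewrite hr heq.
Qed.

Lemma gap_facts (R : realType) l (chi : 'I_l.+1 -> R) eps :
  (forall i j : 'I_l.+1, (i < j)%N -> chi i < chi j) -> chi ord_max < 0 ->
  0 < eps -> eps < eps0 chi ->
  (forall a b : 'I_l.+1, (a < b)%N -> chi a - chi b <= mu_const chi) /\
  mu_const chi + 2 * eps < 0.
Proof.
move=> hchi hneg heps heps0.
have hub : has_ubound [set r : R | exists i (s : 'I_l.+1 -> nat),
         r = chi i - combo chi s /\ r < 0].
  by exists 0 => r [i [s [_ hr]]]; exact: ltW.
have hgap : forall a b : 'I_l.+1, (a < b)%N -> chi a - chi b <= mu_const chi.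
  move=> a b hab; rewrite /mu_const; apply: ub_le_sup => //.
  exists a, (fun j => nat_of_bool (j == b)); split; last first.
    by rewrite subr_lt0; exact: hchi.
  congr (_ - _); rewrite /combo (bigD1 b) //= eqxx mul1r big1 ?addr0 //.
  by move=> j /negPf ->; rewrite mul0r.
split => //.
have h1l : chi1 chi <= chil chi.
  rewrite /chi1 /chil; have [hl|hl] := eqVneq l 0%N.
    have -> : (ord0 : 'I_l.+1) = ord_max by apply/val_inj; rewrite /= hl.
    by [].
  by apply/ltW/hchi; rewrite /= lt0n.
have hd : 1 <= dconst chi.
  have e1 : (1 : int)%:~R = 1 :> R by [].
  rewrite /dconst -e1 ler_int floor_ge_int e1.
  by rewrite ler_ndivlMr // mul1r.
move: heps0; rewrite /eps0 !lt_min => /andP[_ /andP[_ hm]].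
have hd1 : 0 < dconst chi + 1 by lra.
move: hm; rewrite ltr_pdivlMr // => hm.
nra.
Qed.

Section Compact.
Variable R : realType.

Lemma cont_entry m n (i : 'I_m) (j : 'I_n) :
  continuous (fun M : 'M[R]_(m, n) => M i j).
Proof.
move=> u A /nbhs_ballP[e /= e0 eA].
apply/nbhs_ballP; exists e => //= v [_ uv]; apply: eA; exact: uv.
Qed.

Lemma cont_sum_seq (T : topologicalType) (I : Type) (r : seq I) (F : I -> T -> R) :
  (forall i, continuous (F i)) -> continuous (fun p => \sum_(i <- r) F i p).
Proof.
move=> hF; elim: r => [|a r IH].
  have -> : (fun p : T => \sum_(i <- [::]) F i p) = fun=> 0.
    by apply: funext => p; rewrite big_nil.
  exact: cst_continuous.
have -> : (fun p : T => \sum_(i <- a :: r) F i p) =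
          (fun p => F a p + \sum_(i <- r) F i p).
  by apply: funext => p; rewrite big_cons.
by move=> p; exact: (@continuousD _ _ _ (F a) (fun p => \sum_(i <- r) F i p) p (hF a p) (IH p)).
Qed.

Lemma cont_sum (T : topologicalType) (I : finType) (F : I -> T -> R) :
  (forall i, continuous (F i)) -> continuous (fun p => \sum_i F i p).
Proof. exact: cont_sum_seq. Qed.

Lemma cont_mul (T : topologicalType) (a b : T -> R) :
  continuous a -> continuous b -> continuous (fun p => a p * b p).
Proof. by move=> ha hb p; exact: (@continuousM _ _ a b p (ha p) (hb p)). Qed.

Lemma cont_mulrow (T : topologicalType) N (v : T -> 'rV[R]_N) (M : T -> 'M[R]_N) :
  (forall k, continuous (fun p => v p 0 k)) ->
  (forall k i, continuous (fun p => M p k i)) ->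
  forall i, continuous (fun p => (v p *m M p) 0 i).
Proof.
move=> hv hM i.
have -> : (fun p => (v p *m M p) 0 i) = (fun p => \sum_k v p 0 k * M p k i).
  by apply: funext => p; rewrite mxE.
by apply: cont_sum => k; apply: cont_mul.
Qed.

Lemma qf_entries N (M : 'M[R]_N) t :
  qf M t = \sum_j (\sum_i t 0 i * M i j) * t 0 j.
Proof. by rewrite /qf mxE; apply: eq_bigr => j _; rewrite !mxE. Qed.

Lemma cont_qf (T : topologicalType) N (v : T -> 'rV[R]_N) (M : T -> 'M[R]_N) :
  (forall k, continuous (fun p => v p 0 k)) ->
  (forall k i, continuous (fun p => M p k i)) ->
  continuous (fun p => qf (M p) (v p)).
Proof.
move=> hv hM.
have -> : (fun p => qf (M p) (v p)) =
   (fun p => \sum_j (\sum_i v p 0 i * M p i j) * v p 0 j).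
  by apply: funext => p; rewrite qf_entries.
apply: cont_sum => j; apply: cont_mul => //.
by apply: cont_sum => i; apply: cont_mul.
Qed.

End Compact.
Arguments cont_entry {R m n}.

Lemma cont_comp {S T U : topologicalType} {f : S -> T} {g : T -> U} :
  continuous f -> continuous g -> continuous (g \o f).
Proof. by move=> hf hg x; exact: continuous_comp (hf x) (hg (f x)). Qed.

Lemma gamma_bound (R : realType) (X : topologicalType) N (g : X -> X) (B G : X -> 'M[R]_N) :
  compact [set: X] -> continuous g -> continuous B -> continuous G ->
  (forall x, posdef (G x)) ->
  exists K, 0 <= K /\ forall x t, nrm (G (g x)) (t *m B x) <= K * nrm (G x) t.
Proof.
move=> hX hg hB hG pG.
have cfst : continuous (fun p : X * 'rV[R]_N => p.1) by move=> p; exact: cvg_fst.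
have csnd : continuous (fun p : X * 'rV[R]_N => p.2) by move=> p; exact: cvg_snd.
have c2 : forall k, continuous (fun p : X * 'rV[R]_N => p.2 0 k).
  by move=> k; exact: (cont_comp csnd (cont_entry 0 k)).
have cG : forall i j, continuous (fun p : X * 'rV[R]_N => G p.1 i j).
  by move=> i j; exact: (cont_comp cfst (cont_comp hG (cont_entry i j))).
have cGg : forall i j, continuous (fun p : X * 'rV[R]_N => G (g p.1) i j).
  by move=> i j; exact: (cont_comp cfst (cont_comp hg (cont_comp hG (cont_entry i j)))).
have cB : forall i j, continuous (fun p : X * 'rV[R]_N => B p.1 i j).
  by move=> i j; exact: (cont_comp cfst (cont_comp hB (cont_entry i j))).
pose num := fun p : X * 'rV[R]_N => qf (G (g p.1)) (p.2 *m B p.1).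
pose den := fun p : X * 'rV[R]_N => qf (G p.1) p.2 + `|1 - `|p.2| |.
have cnum : continuous num.
  by apply: cont_qf => // k; apply: cont_mulrow.
have cden : continuous den.
  have c0 : continuous (fun p : X * 'rV[R]_N => qf (G p.1) p.2) by exact: cont_qf.
  have c1 : continuous (fun p : X * 'rV[R]_N => `|p.2|).
    exact: (cont_comp csnd norm_continuous).
  have c3 : continuous (fun p : X * 'rV[R]_N => 1 - `|p.2|).
    move=> q.
    have e1 : {for q, continuous (fun=> (1 : R))} by exact: cst_continuous.
    have e2 : {for q, continuous (fun p : X * 'rV[R]_N => - `|p.2|)}.
      exact: (continuousN (c1 q)).
    exact: (continuousD e1 e2).
  have c4 : continuous (fun p : X * 'rV[R]_N => `|1 - `|p.2| |).
    exact: (cont_comp c3 norm_continuous).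
  move=> p; exact: (@continuousD _ _ _ _ _ p (c0 p) (c4 p)).
have den_gt0 : forall p, 0 < den p.
  move=> [x t]; rewrite /den /=; have [->|tn0] := eqVneq t 0.
    by rewrite qfE bf0r normr0 subr0 normr1 add0r.
  by apply: ltr_pwDl; [exact: qf_gt0|exact: normr_ge0].
pose h := fun p => num p * (den p)^-1.
have ch : continuous h.
  move=> p; apply: (@continuousM _ _ num (fun p => (den p)^-1) p (cnum p)).
  by apply: continuousV; [rewrite gt_eqF|exact: cden].
pose S := [set t : 'rV[R]_N | `|t| = 1].
have cS : compact S.
  apply: bounded_closed_compact.
    exists 1; split => // M hM t /= ->; exact: ltW.
  have -> : S = (fun t : 'rV[R]_N => `|t|) @^-1` [set x | x = 1] by [].
  by apply: preimage_closed; [move=> t _; exact: norm_continuous|exact: closed_eq].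
have cK : compact ([set: X] `*` S) := compact_setX hX cS.
have cI : compact (h @` ([set: X] `*` S)).
  exact: continuous_compact (continuous_subspaceT ch) cK.
have [M [_ HM]] := compact_bounded cI.
have hM : forall x u, `|u| = 1 -> h (x, u) <= M + 1.
  move=> x u hu.
  have hM1 : M < M + 1 by rewrite ltrDl.
  have hmem : (h @` ([set: X] `*` S)) (h (x, u)) by exists (x, u).
  have H := HM (M + 1) hM1 _ hmem.
  by apply: le_trans (ler_norm _) H.
exists (Num.sqrt `|M + 1|); split; first exact: sqrtr_ge0.
move=> x t; have [->|tn0] := eqVneq t 0.
  by rewrite mul0mx nrm0 mulr_ge0 ?sqrtr_ge0 ?nrm_ge0.
have nt0 : 0 < `|t| by rewrite normr_gt0.
set c := `|t|^-1.
have c0 : 0 < c by rewrite invr_gt0.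
have hu : `|c *: t| = 1 by rewrite normrZ gtr0_norm // mulVf // gt_eqF.
have hh := hM x _ hu.
rewrite /h /num /den /= hu subrr normr0 addr0 -scalemxAl !qfZ in hh.
have q0 : 0 < qf (G x) t by apply: qf_gt0.

set a := qf (G (g x)) (t *m B x) in hh *.
have e : c ^+ 2 * a / (c ^+ 2 * qf (G x) t) = a / qf (G x) t.
  by field; rewrite !gt_eqF.
rewrite e in hh.
rewrite ler_pdivrMr // in hh.
rewrite /nrm -sqrtrM // ler_sqrt ?mulr_ge0 //; last exact: ltW.
apply: le_trans hh _; rewrite ler_wpM2r ?ler_norm //; exact: ltW.
Qed.

Theorem mainTheorem9
  (R : realType) (X : metricType R) (N l : nat)
  (f g : X -> X)
  (P : X -> 'M[R]_N)                  (* the bundle E *)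
  (A : X -> 'M[R]_N)                  (* F, linear extension of f *)
  (Pi : 'I_l.+1 -> X -> 'M[R]_N)      (* the splitting E = E^1 + ... + E^l *)
  (G : X -> 'M[R]_N)                  (* the (suitable) continuous metric *)
  (chi : 'I_l.+1 -> R) (eps : R)
  (B : X -> 'M[R]_N)                  (* Gamma, linear extension of g *)
  (* X compact metric space, f homeomorphism *)
  (hX : compact [set: X])
  (hf : homeomorphism f)
  (* E continuous bundle with continuous inner products, F linear ext. *)
  (hP : cont_subbundle P)
  (hG : cont_inner G)
  (hA : lin_extension P f A)
  (* chi and eps *)
  (hchi : forall i j : 'I_l.+1, (i < j)%N -> chi i < chi j)
  (hchineg : chi ord_max < 0)
  (heps : 0 < eps) (heps0 : eps < eps0 chi)
  (* continuous F-invariant splitting with the growth bounds *)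
  (hPi : forall i, cont_subbundle (Pi i))
  (hsum : forall x, (\sum_i Pi i x == P x)%MS)
  (hdirect : forall x, mxdirect (\sum_i Pi i x))
  (hinv : forall i x, (Pi i x *m A x == Pi i (f x))%MS)
  (hgrowth : forall i x (t : 'rV[R]_N), (t <= Pi i x)%MS ->
      expR (chi i - eps) * fib_norm (G x) t <= fib_norm (G (f x)) (t *m A x) /\
      fib_norm (G (f x)) (t *m A x) <= expR (chi i + eps) * fib_norm (G x) t)
  (* g homeomorphism commuting with f; Gamma commuting with F *)
  (hg : homeomorphism g)
  (hfg : forall x, g (f x) = f (g x))
  (hB : lin_extension P g B)
  (hcomm : forall x, P x *m A x *m B (f x) = P x *m B x *m A (g x)) :
  forall (x : X) (i : 'I_l.+1), (Pi i x *m B x == Pi i (g x))%MS.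
Proof.
move=> x i.
have [finv [_ _ hfK hKf]] := hf.
have [ginv [gc _ _ _]] := hg.
have pG : forall y, posdef (G y) by move=> y; exact: (proj2 hG y).
have [K [hK0 hKb]] := @gamma_bound R X N g B G hX gc (proj1 hB) (proj1 hG) pG.
have [hgap hmu] := @gap_facts R l chi eps hchi hchineg heps heps0.
have hAP : forall y, (P y *m A y == P (f y))%MS by move=> y; exact: (proj2 hA y).1.
have hBP : forall y, (P y *m B y == P (g y))%MS by move=> y; exact: (proj2 hB y).1.
have hgr : forall i x (t : 'rV[R]_N), (t <= Pi i x)%MS ->
      expR (chi i - eps) * nrm (G x) t <= nrm (G (f x)) (t *m A x) /\
      nrm (G (f x)) (t *m A x) <= expR (chi i + eps) * nrm (G x) t.
  exact: hgrowth.
have gP : forall y j, (Pi j y *m B y <= Pi j (g y))%MS.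
  move=> y j.
  exact: (@gamma_Pi R X N l f finv g P A B G Pi chi eps (mu_const chi) K hfK hKf hfg hAP hBP hsum hdirect hinv pG hgr hcomm hKb hK0 hgap hmu).
apply: (@eq_from_sub _ _ _ (fun j => Pi j x) (fun j => Pi j (g x)) (P x) (P (g x)) (B x)
  (hsum x) (hsum (g x)) (hdirect x) (hdirect (g x)) (hBP x) (proj2 (proj2 hB x)) (gP x)).
Qed.
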